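(* Let $R$ be a commutative ring endowed with a translation-invariant partial order $\le$ on its additive group, and assume that $R$ is archimedean and localizable. Then $n\cdot 1\in\mathrm{Loc}(R)$ for every $n\in\mathbb{N}$.
   Context: Rings are commutative with unit $1$; $\mathbb{N}=\{1,2,\dots\}$. Translation-invariant means $r\le s$ implies $r+t\le s+t$; $R^+=\{r:0\le r\}$. $R$ is archimedean if whenever $g,h\in R$ satisfy $kg+h\in R^+$ for all $k\in\mathbb{N}$, then $g\in R^+$. $\mathrm{Loc}(R)$ is the set of $s\in 1+R^+$ such that for all $r\in R$, $rs\in R^+$ implies $r\in R^+$. $R$ is localizable if for every $r\in R$ there exists $s\in\mathrm{Loc}(R)$ with $-s\le r\le s$. *)

(* Defs.v *)
From HB Require Import structures.
From mathcomp Require Import all_boot all_order all_algebra.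
Set Implicit Arguments. Unset Strict Implicit. Unset Printing Implicit Defensive.
Import GRing.Theory.
Local Open Scope ring_scope.

Definition partial_order (R : Type) (le : R -> R -> Prop) : Prop :=
  (forall r, le r r) /\
  (forall r s, le r s -> le s r -> r = s) /\
  (forall r s t, le r s -> le s t -> le r t).

Definition translation_invariant (R : comPzRingType) (le : R -> R -> Prop) : Prop :=
  forall r s t : R, le r s -> le (r + t) (s + t).

Definition Rplus (R : comPzRingType) (le : R -> R -> Prop) (r : R) : Prop := le 0 r.

Definition archimedean (R : comPzRingType) (le : R -> R -> Prop) : Prop :=
  forall g h : R, (forall k : nat, (0 < k)%N -> Rplus le (g *+ k + h)) -> Rplus le g.

Definition Loc (R : comPzRingType) (le : R -> R -> Prop) (s : R) : Prop :=
  (exists p : R, Rplus le p /\ s = 1 + p) /\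
  (forall r : R, Rplus le (r * s) -> Rplus le r).

Definition localizable (R : comPzRingType) (le : R -> R -> Prop) : Prop :=
  forall r : R, exists s : R, Loc le s /\ le (- s) r /\ le r s.

(* Main.v *)
Require Import Defs.
From HB Require Import structures.
From mathcomp Require Import all_boot all_order all_algebra.
Local Open Scope ring_scope.
Import GRing.Theory.

Lemma nonneg_add (R : comPzRingType) (le : R -> R -> Prop)
  (Hpo : partial_order le) (Hti : translation_invariant le) (a b : R) :
  le 0 a -> le 0 b -> le 0 (a + b).
Proof.
case: Hpo => _ [_ Htr] Ha Hb.
apply: (Htr _ b); first exact: Hb.
have := Hti _ _ b Ha. by rewrite add0r.
Qed.

Lemma nonneg_muln (R : comPzRingType) (le : R -> R -> Prop)
  (Hpo : partial_order le) (Hti : translation_invariant le) (a : R) m :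
  le 0 a -> le 0 (a *+ m).
Proof.
move=> Ha; elim: m => [|m IH]; first by rewrite mulr0n; case: Hpo.
by rewrite mulrS; apply: nonneg_add.
Qed.

Theorem lemma3 (R : comPzRingType) (le : R -> R -> Prop)
  (Hpo : partial_order le) (Hti : translation_invariant le)
  (Harch : archimedean le) (Hloc : localizable le) :
  forall n : nat, (0 < n)%N -> Loc le (n%:R : R).
Proof.
have H1 : le 0 (1 : R).
  have [s [[_ Hs] [_ H0s]]] := Hloc 0.
  apply: Hs; by rewrite /Rplus mul1r.
move=> n Hn; split.
  exists ((n.-1)%:R); split; first exact: nonneg_muln.
  by rewrite -{1}(prednK Hn) -natr1 addrC.
move=> r Hr; rewrite /Rplus in Hr.
have [s [[[p [Hp Es]] _] [Hsr _]]] := Hloc r.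
have Hs : le 0 s by rewrite Es; apply: nonneg_add.
have Hrs : le 0 (r + s).
  have := Hti _ _ s Hsr; by rewrite addNr.
apply: (Harch r (s *+ n.-1)) => k _.
rewrite /Rplus (divn_eq k n) mulrnDr mulrnA.
have Hj : (k %% n <= n.-1)%N by rewrite -ltnS prednK // ltn_mod.
rewrite -(subnKC Hj) mulrnDr.
rewrite mulrnAC -addrA [r *+ (k %% n) + _]addrA -mulrnDl addrA.
apply: nonneg_add => //; last by apply: nonneg_muln.
apply: nonneg_add => //; last by apply: nonneg_muln.
apply: nonneg_muln => //.
by rewrite -mulr_natr.
Qed.
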